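(* Let $\mathbb{R}^n_s$ be $\mathbb{R}^n$ with a non-degenerate symmetric bilinear form of signature $(n-s,s)$, and let $G\subset\mathrm{Iso}(\mathbb{R}^n_s)$ be a real Zariski-closed subgroup of dimension $k$ whose centralizer in $\mathrm{Iso}(\mathbb{R}^n_s)$ acts transitively on $\mathbb{R}^n$. Let $\mathfrak{g}$ be the Lie algebra of $G$ and let $X_1,\dots,X_k$ be a Malcev basis of $\mathfrak{g}$, with $X_i=(A_i,v_i)$. For $p\in\mathbb{R}^n$ put $b_i(p)=A_ip+v_i$. Then the orbit $F_p=G.p$ is the affine subspace $$F_p=p+\mathrm{span}\{b_1(p),\dots,b_k(p)\}$$ and $\dim F_p=k$.
   Context: Affine maps of $\mathbb{R}^n$ are written $(I+A,v)$ (linear part $I+A$, translation $v$), identified with the matrix $\begin{pmatrix}I+A&v\\0&1\end{pmatrix}\in\mathrm{GL}_{n+1}(\mathbb{R})$; elements of $\mathfrak{g}$ are written $(A,v)$, identified with $\begin{pmatrix}A&v\\0&0\end{pmatrix}$. $G$ is a unipotent group. A Malcev basis of $\mathfrak{g}$ is a basis $X_1,\dots,X_k$ such that every $g\in G$ can be written uniquely as $g=\exp(t_1X_1+\dots+t_kX_k)$ with real $t_1,\dots,t_k$. *)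

(* Defs.v *)
From mathcomp Require Import all_boot all_order all_algebra.
From mathcomp Require Import all_classical all_reals all_analysis.
Set Implicit Arguments. Unset Strict Implicit. Unset Printing Implicit Defensive.
Import Order.TTheory GRing.Theory Num.Theory.
Local Open Scope classical_set_scope.
Local Open Scope ring_scope.

Section Defs.
Variable R : realType.

Definition mxpow (m : nat) (X : 'M[R]_m) (k : nat) : 'M[R]_m :=
  iter k (mulmx X) 1%:M.

Definition mxexp (m : nat) (X : 'M[R]_m) : 'M[R]_m :=
  \matrix_(i, j) limn (fun N : nat => \sum_(l < N) (mxpow X l) i j / (l`!)%:R).

Inductive pexpr (m : nat) : Type :=
| PVar of 'I_m & 'I_m
| PConst of R
| PAdd of pexpr m & pexpr m
| PMul of pexpr m & pexpr m.

Fixpoint peval (m : nat) (e : pexpr m) (M : 'M[R]_m) : R :=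
  match e with
  | PVar i j => M i j
  | PConst c => c
  | PAdd e1 e2 => peval e1 M + peval e2 M
  | PMul e1 e2 => peval e1 M * peval e2 M
  end.

Definition zariski_closed (m : nat) (G : set 'M[R]_m) : Prop :=
  G `<=` [set M | M \in unitmx] /\
  exists (I : Type) (P : I -> pexpr m),
    forall M, M \in unitmx -> (G M <-> forall i, peval (P i) M = 0).

Definition is_subgroup (m : nat) (G : set 'M[R]_m) : Prop :=
  [/\ G 1%:M,
      (forall g h, G g -> G h -> G (g *m h)) &
      (forall g, G g -> g \in unitmx /\ G (invmx g))].

Definition unipotent_group (m : nat) (G : set 'M[R]_m) : Prop :=
  forall g, G g -> exists l, mxpow (g - 1%:M) l = 0.

Definition lie_alg (m : nat) (G : set 'M[R]_m) : set 'M[R]_m :=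
  [set X | forall t : R, G (mxexp (t *: X))].

Definition affmx (n : nat) (L : 'M[R]_n) (v : 'cV[R]_n) : 'M[R]_(n + 1) :=
  block_mx L v 0 1%:M.

Definition act (n : nat) (M : 'M[R]_(n + 1)) (p : 'cV[R]_n) : 'cV[R]_n :=
  usubmx (M *m col_mx p 1%:M).

Definition Jform (n s : nat) : 'M[R]_n :=
  diag_mx (\row_(i < n) (if (i < n - s)%N then 1 else -1)).

Definition form_of_signature (n s : nat) (S : 'M[R]_n) : Prop :=
  (s <= n)%N /\ S^T = S /\
  exists P : 'M[R]_n, P \in unitmx /\ S = P^T *m Jform n s *m P.

Definition Iso (n : nat) (S : 'M[R]_n) : set 'M[R]_(n + 1) :=
  [set M | exists (L : 'M[R]_n) (v : 'cV[R]_n),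
             M = affmx L v /\ L^T *m S *m L = S].

Definition malcev_basis (m k : nat) (G : set 'M[R]_m) (X : 'I_k -> 'M[R]_m) : Prop :=
  [/\ (forall i, lie_alg G (X i)),
      (forall Y, lie_alg G Y -> exists c : 'I_k -> R, Y = \sum_(i < k) c i *: X i),
      (forall c : 'I_k -> R, \sum_(i < k) c i *: X i = 0 -> forall i, c i = 0) &
      (forall g, G g -> exists t : 'I_k -> R,
          g = mxexp (\sum_(i < k) t i *: X i) /\
          forall t' : 'I_k -> R, g = mxexp (\sum_(i < k) t' i *: X i) -> t' =1 t)].

Definition bvec (n : nat) (X : 'M[R]_(n + 1)) (p : 'cV[R]_n) : 'cV[R]_n :=
  ulsubmx X *m p + ursubmx X.

End Defs.

(* Main.v *)
Require Import Defs.
From mathcomp Require Import all_boot all_order all_algebra.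
From mathcomp Require Import all_classical all_reals all_analysis.
From mathcomp Require Import ring lra.
Import Order.TTheory GRing.Theory Num.Theory numFieldNormedType.Exports.
Local Open Scope classical_set_scope.
Local Open Scope ring_scope.
Set Implicit Arguments. Unset Strict Implicit. Unset Printing Implicit Defensive.

Section A.
Variable R : realType.

Lemma mxpowS m (X : 'M[R]_m) l : mxpow X l.+1 = X *m mxpow X l.
Proof. by []. Qed.

Lemma mxpowZ m (X : 'M[R]_m) t l : mxpow (t *: X) l = t ^+ l *: mxpow X l.
Proof.
elim: l => [|l IH]; first by rewrite expr0 scale1r.
rewrite !mxpowS IH. rewrite -scalemxAl. rewrite scalemxAr. by rewrite scalerA exprS scalemxAr.
Qed.

Definition msum m (X : 'M[R]_m) : R := \sum_(i < m) \sum_(j < m) `|X i j|%R.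
Lemma msum_ge0 m (X : 'M[R]_m) : 0 <= msum X.
Proof. by apply: sumr_ge0 => i _; apply: sumr_ge0. Qed.

Lemma mxpow_bound m (X : 'M[R]_m) l i j : `|mxpow X l i j| <= msum X ^+ l.
Proof.
elim: l i j => [|l IH] i j.
  rewrite expr0 /mxpow /= mxE. by case: (i == j); rewrite ?normr1 ?normr0.
rewrite mxpowS mxE exprS.
apply: (le_trans (ler_norm_sum _ _ _)).
apply: (@le_trans _ _ (\sum_k `|X i k| * msum X ^+ l)).
  by apply: ler_sum => k _; rewrite normrM; apply: ler_wpM2l.
rewrite -mulr_suml; apply: ler_wpM2r; first exact: exprn_ge0 (msum_ge0 _).
rewrite /msum [X in _ <= X](bigD1 i) //= lerDl; by apply: sumr_ge0 => k _; apply: sumr_ge0.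
Qed.

Lemma mxexp_entry m (X : 'M[R]_m) (t : R) i j : 0 < t <= 1 ->
  `|mxexp (t *: X) i j - (1%:M i j + t * X i j)| <=
     t ^+ 2 * limn (series (@exp_coeff R (msum X)) : R^nat).
Proof.
move=> /andP[t0 t1].
set a := msum X.
have a0 : 0 <= a := msum_ge0 X.
set K := limn _.
pose u := fun l => mxpow (t *: X) l i j / l`!%:R.
have ule : forall l, `|u l| <= t ^+ (minn l 2) * exp_coeff a l.
  move=> l; rewrite /u /exp_coeff /= mxpowZ mxE normrM normrM.
  rewrite (ger0_norm (exprn_ge0 _ (ltW t0))) [`|_^-1|]ger0_norm ?invr_ge0 ?ler0n //.
  rewrite mulrA; apply: ler_wpM2r; first by rewrite invr_ge0 ler0n.
  have -> : t ^+ l = t ^+ (minn l 2) * t ^+ (l - minn l 2).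
    by rewrite -exprD subnKC // geq_minl.
  rewrite -mulrA; apply: ler_wpM2l; first by rewrite exprn_ge0 // ltW.
  rewrite -[a ^+ l]mul1r; apply: ler_pM.
  - by rewrite exprn_ge0 // ltW.
  - by [].
  - exact: exprn_ile1 (ltW t0) t1.
  - exact: mxpow_bound.
have eK : cvgn (series (exp_coeff a)) := is_cvg_series_exp_coeff a.
have cu : cvgn (series u).
  apply: normed_cvg; apply: (@series_le_cvg _ _ (exp_coeff a)).
  - by move=> n; rewrite normr_ge0.
  - by move=> n; rewrite exp_coeff_ge0.
  - move=> n; apply: (le_trans (ule n)); rewrite -[leRHS]mul1r.
    apply: ler_wpM2r; first by rewrite exp_coeff_ge0.
    exact: exprn_ile1 (ltW t0) t1.
  - exact: eK.
have Ke : forall N, series (exp_coeff a) N <= K.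
  apply: nondecreasing_cvgn_le => //.
  by apply: nondecreasing_series => n _ _; rewrite exp_coeff_ge0.
have u0 : u 0%N = 1%:M i j by rewrite /u /= divr1.
have u1 : u 1%N = t * X i j by rewrite /u /= divr1 mulmx1 mxE.
have hb : forall N, `|series u N.+2 - (1%:M i j + t * X i j)| <= t ^+ 2 * K.
  move=> N; rewrite /series /= big_ltn // big_ltn // u0 u1 addrA. rewrite (addrC (_ + _ + _)) addKr.
  apply: (le_trans (ler_norm_sum _ _ _)).
  apply: (@le_trans _ _ (\sum_(2 <= k < N.+2) t ^+ 2 * exp_coeff a k)).
    apply: ler_sum_nat => k /andP[k2 _]; apply: (le_trans (ule k)).
    by rewrite (minn_idPr k2).
  rewrite -mulr_sumr; apply: ler_wpM2l; first by rewrite exprn_ge0 // ltW.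
  apply: le_trans (Ke N.+2); rewrite /series /= [in leRHS]big_ltn // [in leRHS]big_ltn //.
  by rewrite addrA lerDr addr_ge0 // exp_coeff_ge0.
have -> : mxexp (t *: X) i j = limn (series u).
  rewrite mxE; congr (limn _); apply: funext => N.
  by rewrite /series /= big_mkord.
have hb' : \forall N \near \oo, `|series u N - (1%:M i j + t * X i j)| <= t ^+ 2 * K.
  exists 2%N => // n /= n2.
  by have := hb (n - 2)%N; rewrite -addn2 subnK.
rewrite ler_norml; apply/andP; split.
  rewrite lerBrDl; apply: limr_ge => //.
  by apply: filterS hb' => N; rewrite ler_norml => /andP[+ _]; rewrite lerBrDl.
rewrite lerBlDl; apply: limr_le => //.
by apply: filterS hb' => N; rewrite ler_norml => /andP[_]; rewrite lerBlDl.
Qed.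
End A.


Section B.
Variable R : realType.

Definition bnd a b (f : R -> 'M[R]_(a,b)) :=
  exists K, forall t, 0 < t <= 1 -> forall i j, `|f t i j| <= K.

Lemma bnd_cst a b (M : 'M[R]_(a,b)) : bnd (fun=> M).
Proof.
exists (\sum_i \sum_j `|M i j|) => t _ i j.
rewrite (bigD1 i) //= (bigD1 j) //= -addrA lerDl addr_ge0 //.
  by apply: sumr_ge0.
by apply: sumr_ge0 => ? _; apply: sumr_ge0.
Qed.

Lemma bnd_add a b (f g : R -> 'M[R]_(a,b)) : bnd f -> bnd g -> bnd (fun t => f t + g t).
Proof.
move=> [K1 h1] [K2 h2]; exists (K1 + K2) => t ht i j; rewrite mxE.
by apply: (le_trans (ler_normD _ _)); apply: lerD; [apply: h1|apply: h2].
Qed.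

Lemma bnd_opp a b (f : R -> 'M[R]_(a,b)) : bnd f -> bnd (fun t => - f t).
Proof. by move=> [K h]; exists K => t ht i j; rewrite mxE normrN; apply: h. Qed.

Lemma bnd_scale a b (f : R -> 'M[R]_(a,b)) : bnd f -> bnd (fun t => t *: f t).
Proof.
move=> [K h]; exists `|K| => t /andP[t0 t1] i j; rewrite mxE normrM.
rewrite -[`|K|]mul1r; apply: ler_pM => //.
  by rewrite ger0_norm // ltW.
by apply: le_trans (h t _ i j) (ler_norm _); rewrite t0.
Qed.

Lemma bnd_tr a b (f : R -> 'M[R]_(a,b)) : bnd f -> bnd (fun t => (f t)^T).
Proof. by move=> [K h]; exists K => t ht i j; rewrite mxE; apply: h. Qed.

Lemma bnd_mul a b c (f : R -> 'M[R]_(a,b)) (g : R -> 'M[R]_(b,c)) :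
  bnd f -> bnd g -> bnd (fun t => f t *m g t).
Proof.
move=> [K1 h1] [K2 h2]; exists (b%:R * (`|K1| * `|K2|)) => t ht i j; rewrite mxE.
apply: (le_trans (ler_norm_sum _ _ _)).
have -> : b%:R * (`|K1| * `|K2|) = \sum_(k < b) (`|K1| * `|K2|) by rewrite sumr_const card_ord mulr_natl.
apply: ler_sum => k _.
rewrite normrM; apply: ler_pM => //.
  by apply: le_trans (h1 t ht i k) (ler_norm _).
by apply: le_trans (h2 t ht k j) (ler_norm _).
Qed.

Lemma bnd_ul a b (f : R -> 'M[R]_(a + b)) : bnd f -> bnd (fun t => ulsubmx (f t)).
Proof. by move=> [K h]; exists K => t ht i j; rewrite !mxE; apply: h. Qed.
Lemma bnd_ur a b (f : R -> 'M[R]_(a + b)) : bnd f -> bnd (fun t => ursubmx (f t)).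
Proof. by move=> [K h]; exists K => t ht i j; rewrite !mxE; apply: h. Qed.
Lemma bnd_dl a b (f : R -> 'M[R]_(a + b)) : bnd f -> bnd (fun t => dlsubmx (f t)).
Proof. by move=> [K h]; exists K => t ht i j; rewrite !mxE; apply: h. Qed.
Lemma bnd_dr a b (f : R -> 'M[R]_(a + b)) : bnd f -> bnd (fun t => drsubmx (f t)).
Proof. by move=> [K h]; exists K => t ht i j; rewrite !mxE; apply: h. Qed.

Lemma bnd_zero a b (M : 'M[R]_(a,b)) (f : R -> 'M[R]_(a,b)) :
  bnd f -> (forall t, 0 < t <= 1 -> M = t *: f t) -> M = 0.
Proof.
move=> [K h] hM; apply/matrixP => i j; rewrite mxE.
apply/eqP; rewrite -normr_eq0; apply/eqP/le_anti; rewrite normr_ge0 andbT.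
have K0 : 0 <= K by apply: le_trans (h 1 _ i j); rewrite ?normr_ge0 ?ltr01 ?lexx.
apply/ler_addgt0Pr => e e0.
pose t := Num.min 1 (e / (K + 1)).
have Kp : 0 < K + 1 by rewrite ltr_wpDl.
have t0 : 0 < t by rewrite lt_min ltr01 divr_gt0.
have t1 : t <= 1 by rewrite ge_min lexx.
have ht : 0 < t <= 1 by rewrite t0 t1.
rewrite (hM t ht) mxE normrM add0r (ger0_norm (ltW t0)).
apply: (@le_trans _ _ (t * (K + 1))).
  by apply: ler_wpM2l; [rewrite ltW | apply: le_trans (h t ht i j) _; rewrite lerDl].
by rewrite -ler_pdivlMr // ge_min lexx orbT.
Qed.

Definition Bx m (X : 'M[R]_m) (t : R) := t^-2 *: (mxexp (t *: X) - 1%:M - t *: X).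

Lemma Bx_bnd m (X : 'M[R]_m) : bnd (Bx X).
Proof.
exists (limn (series (@exp_coeff R (msum X)))) => t ht i j.
have [t0 _] := andP ht.
rewrite /Bx !mxE normrM ger0_norm; last by rewrite invr_ge0 exprn_ge0 // ltW.
rewrite mulrC ler_pdivrMr ?exprn_gt0 // mulrC.
have := mxexp_entry X i j ht.
rewrite !mxE opprD addrA [X i j * t]mulrC => /le_trans; apply; by rewrite mulrC.

Qed.

Lemma Bx_eq m (X : 'M[R]_m) t : 0 < t ->
  mxexp (t *: X) = 1%:M + t *: X + t ^+ 2 *: Bx X t.
Proof.
move=> t0; rewrite /Bx scalerA divff ?scale1r ?expf_neq0 ?gt_eqF //.
by rewrite addrCA addrK subrK.
Qed.
End B.


Section C.
Variable R : realType.

Lemma swap_eq (V : zmodType) (a b c d : V) : a + b = c + d -> a - c = d - b.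
Proof. by move=> h; apply/eqP; rewrite subr_eq addrAC [d + c]addrC -h addrK. Qed.

Lemma lie_comm m (G : set 'M[R]_m) X c :
  (forall t, G (mxexp (t *: X))) -> (forall g, G g -> c *m g = g *m c) ->
  c *m X = X *m c.
Proof.
move=> hX hc; apply/eqP; rewrite -subr_eq0; apply/eqP.
apply: (@bnd_zero _ _ _ _ (fun t => Bx X t *m c - c *m Bx X t)).
  apply: bnd_add; first by apply: bnd_mul; [apply: Bx_bnd| apply: bnd_cst].
  by apply: bnd_opp; apply: bnd_mul; [apply: bnd_cst|apply: Bx_bnd].
move=> t /andP[t0 _]; have := hc _ (hX t); rewrite Bx_eq //; move: (Bx X t) => B.
rewrite !mulmxDr !mulmxDl mulmx1 mul1mx -!scalemxAr -!scalemxAl -!addrA.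
move=> /addrI /swap_eq h.
apply: (@scalerI _ _ t); first by rewrite gt_eqF.
by rewrite /= scalerBr h scalerA -expr2 scalerBr.
Qed.

Lemma cancel1 a b (t : R) (M N : 'M[R]_(a,b)) : t != 0 ->
  0 = t *: M + t^+2 *: N -> M = t *: (- N).
Proof.
move=> t0 h; apply: (scalerI t0); rewrite /= scalerA -expr2 scalerN.
by apply/eqP; rewrite -addr_eq0 -h.
Qed.

Lemma expand_form n (S D : 'M[R]_n) t :
  (1%:M + t *: D)^T *m S *m (1%:M + t *: D) =
  S + t *: (D^T *m S + S *m D) + t^+2 *: (D^T *m S *m D).
Proof.
rewrite [(1%:M + _)^T]linearD /= trmx1 [(t *: D)^T]linearZ /= mulmxDl mul1mx !mulmxDr mulmx1.
by rewrite mulmxDl -!scalemxAl -!scalemxAr !scalerDr scalerA -expr2 !addrA.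
Qed.

Lemma skew_aux n (S A B L : 'M[R]_n) t : t != 0 ->
  L = 1%:M + t *: A + t^+2 *: B -> L^T *m S *m L = S ->
  A^T *m S + S *m A =
  t *: (- ((A + t *: B)^T *m S *m (A + t *: B)) - (B^T *m S + S *m B)).
Proof.
move=> t0 hL hS.
have hL' : L = 1%:M + t *: (A + t *: B) by rewrite hL scalerDr scalerA -expr2 addrA.
move: hS; rewrite hL' expand_form -addrA => hS.
have {hS} : t *: ((A + t *: B)^T *m S + S *m (A + t *: B)) +
   t ^+ 2 *: ((A + t *: B)^T *m S *m (A + t *: B)) = 0.
  by apply: (addrI S); rewrite addr0.
move=> /esym /(cancel1 t0) h.
rewrite scalerBr -h linearD /= linearZ /= mulmxDl mulmxDr -scalemxAl -scalemxAr.
by apply/matrixP => i j; rewrite !mxE; ring.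
Qed.

Lemma lie_props n (S : 'M[R]_n) (G : set 'M[R]_(n + 1)) X :
  G `<=` Iso S -> (forall t, G (mxexp (t *: X))) ->
  [/\ dlsubmx X = 0, drsubmx X = 0 &
      (ulsubmx X)^T *m S + S *m ulsubmx X = 0].
Proof.
move=> hG hX.
have key : forall t, 0 < t <= 1 -> exists L : 'M[R]_n, (L^T *m S *m L = S) /\
   ([/\ L = 1%:M + t *: ulsubmx X + t^+2 *: ulsubmx (Bx X t),
       0 = t *: dlsubmx X + t^+2 *: dlsubmx (Bx X t) &
       0 = t *: drsubmx X + t^+2 *: drsubmx (Bx X t)]).
  move=> t /andP[t0 _]; have [L [v [hE hL]]] := hG _ (hX t).
  exists L; split => //.
  move: hE; rewrite Bx_eq //; move: (Bx X t) => B.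
  rewrite /affmx -[X in 1%:M + t *: X]submxK -[B]submxK (@scalar_mx_block _ n 1 1).
  rewrite !scale_block_mx !add_block_mx => /eq_block_mx[e1 _ e3 e4].
  rewrite !submxK; split; first by rewrite -e1.
    by rewrite -e3 add0r.
  by apply: (addrI 1%:M); rewrite addr0 addrA e4.
split.
- apply: (@bnd_zero _ _ _ _ (fun t => - dlsubmx (Bx X t))).
    by apply: bnd_opp; apply: bnd_dl; apply: Bx_bnd.
  move=> t ht; have [t0 _] := andP ht; have [L [_ [_ h _]]] := key t ht.
  by apply: cancel1 h; rewrite gt_eqF.
- apply: (@bnd_zero _ _ _ _ (fun t => - drsubmx (Bx X t))).
    by apply: bnd_opp; apply: bnd_dr; apply: Bx_bnd.
  move=> t ht; have [t0 _] := andP ht; have [L [_ [_ _ h]]] := key t ht.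
  by apply: cancel1 h; rewrite gt_eqF.
- apply: (@bnd_zero _ _ _ _ (fun t => - ((ulsubmx X + t *: ulsubmx (Bx X t))^T *m S *m
     (ulsubmx X + t *: ulsubmx (Bx X t))) -
     ((ulsubmx (Bx X t))^T *m S + S *m ulsubmx (Bx X t)))).
    have bD : bnd (fun t => ulsubmx X + t *: ulsubmx (Bx X t)).
      by apply: bnd_add; [apply: bnd_cst | apply: bnd_scale; apply: bnd_ul; apply: Bx_bnd].
    have bB : bnd (fun t => ulsubmx (Bx X t)) by apply: bnd_ul; apply: Bx_bnd.
    apply: bnd_add; apply: bnd_opp.
      by apply: bnd_mul; [apply: bnd_mul; [apply: bnd_tr|apply: bnd_cst]|].
    by apply: bnd_add; [apply: bnd_mul; [apply: bnd_tr|apply: bnd_cst]|apply: bnd_mul; [apply: bnd_cst|]].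
  move=> t ht; have [t0 _] := andP ht; have [L [hL [h _ _]]] := key t ht.
  by apply: skew_aux hL; rewrite ?gt_eqF.
Qed.
End C.


Section D.
Variable R : realType.
Variable n : nat.
Variable S : 'M[R]_n.
Hypothesis Ssym : S^T = S.
Hypothesis Sunit : S \in unitmx.

Definition bf (x y : 'cV[R]_n) : R := (x^T *m S *m y) 0 0.

Lemma bfDr x y z : bf x (y + z) = bf x y + bf x z.
Proof. by rewrite /bf mulmxDr mxE. Qed.
Lemma bfDl x y z : bf (x + y) z = bf x z + bf y z.
Proof. by rewrite /bf linearD /= !mulmxDl mxE. Qed.
Lemma bfNr x y : bf x (- y) = - bf x y.
Proof. by rewrite /bf mulmxN mxE. Qed.
Lemma bfNl x y : bf (- x) y = - bf x y.
Proof. by rewrite /bf linearN /= !mulNmx mxE. Qed.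
Lemma bfZr c x y : bf x (c *: y) = c * bf x y.
Proof. by rewrite /bf -scalemxAr mxE. Qed.
Lemma bfZl c x y : bf (c *: x) y = c * bf x y.
Proof. by rewrite /bf linearZ /= -!scalemxAl mxE. Qed.
Lemma bfC x y : bf x y = bf y x.
Proof.
rewrite /bf -[in LHS](trmxK (x^T *m S *m y)) [in LHS]mxE.
by rewrite !trmx_mul trmxK Ssym mulmxA.
Qed.
Lemma bfMl (M : 'M[R]_n) x y : bf (M *m x) y = (x^T *m (M^T *m S) *m y) 0 0.
Proof. by rewrite /bf trmx_mul !mulmxA. Qed.
Lemma bfMr (M : 'M[R]_n) x y : bf x (M *m y) = (x^T *m (S *m M) *m y) 0 0.
Proof. by rewrite /bf !mulmxA. Qed.

Lemma bf_delta (N : 'M[R]_n) i j :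
  ((delta_mx i (0 : 'I_1))^T *m N *m delta_mx j (0 : 'I_1)) 0 0 = N i j.
Proof. by rewrite trmx_delta -rowE -colE !mxE. Qed.

Lemma bf_zero (M : 'M[R]_n) : (forall x y, bf x (M *m y) = 0) -> M = 0.
Proof.
move=> h.
have SM : S *m M = 0.
  apply/matrixP => i j; rewrite [RHS]mxE -bf_delta.
  by rewrite -bfMr h.
by rewrite -[M]mul1mx -(mulVmx Sunit) -mulmxA SM mulmx0.
Qed.
Lemma bf_vzero (z : 'cV[R]_n) : (forall x, bf x z = 0) -> z = 0.
Proof.
move=> h.
have SM : S *m z = 0.
  apply/matrixP => i j; rewrite [RHS]mxE (ord1 j).
  have := h (delta_mx i 0); rewrite /bf trmx_delta -mulmxA -rowE => <-.
  by rewrite [RHS]mxE.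
by rewrite -[z]mul1mx -(mulVmx Sunit) -mulmxA SM mulmx0.
Qed.

Lemma sq_zero (Y : 'M[R]_(n + 1)) :
  dlsubmx Y = 0 -> drsubmx Y = 0 -> (ulsubmx Y)^T *m S + S *m ulsubmx Y = 0 ->
  (forall w : 'cV[R]_n, exists L : 'M[R]_n,
     L^T *m S *m L = S /\ affmx L w *m Y = Y *m affmx L w) ->
  Y *m Y = 0.
Proof.
move=> hdl hdr hsk hc.
set A := ulsubmx Y; set v := ursubmx Y.
have hY : Y = block_mx A v 0 0 by rewrite -hdl -hdr submxK.
have skew : forall x y, bf (A *m x) y = - bf x (A *m y).
  move=> x y; rewrite bfMl bfMr.
  have -> : A^T *m S = - (S *m A) by apply/eqP; rewrite -addr_eq0 hsk.
  by rewrite mulmxN mulNmx mxE.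
have Lp : forall w, exists L : 'M[R]_n,
    (forall x y, bf (L *m x) (L *m y) = bf x y) /\ A *m w = L *m v - v.
  move=> w; have [L [hL hcw]] := hc w; exists L; split.
    move=> x y.
    have -> : bf x y = (x^T *m (L^T *m S *m L) *m y) 0 0 by rewrite hL.
    by rewrite /bf trmx_mul !mulmxA.
  move: hcw; rewrite hY /affmx !mulmx_block => /eq_block_mx[_ e2 _ _].
  by move: e2; rewrite mulmx0 addr0 mulmx1 => ->; rewrite addrK.
pose F w := bf w (A *m (A *m w)).
pose Gf w := bf w (A *m v).
have eq1 : forall w, F w + 2 * Gf w = 0.
  move=> w; have [L [hL hu]] := Lp w.
  have e1 : bf (A *m w) (A *m w) = - F w by rewrite skew.
  have e2 : bf (A *m w) v = - Gf w by rewrite skew.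
  have e3 : bf (A *m w) (A *m w) = -2 * bf (A *m w) v.
    rewrite hu !bfDl !bfDr !bfNl !bfNr hL (bfC v (L *m v)); ring.
  rewrite e1 e2 in e3; lra.
have FG0 : forall w, F w = 0 /\ Gf w = 0.
  move=> w; have h1 := eq1 w; have h2 := eq1 (2 *: w).
  move: h2; rewrite /F /Gf -!scalemxAr !bfZl !bfZr -/(F w) -/(Gf w) => h2.
  split; lra.
have Av : A *m v = 0 by apply: bf_vzero => x; case: (FG0 x).
have AA : A *m A = 0.
  apply: bf_zero => x y; rewrite -mulmxA.
  have q0 : forall z, bf z (A *m (A *m z)) = 0 by move=> z; case: (FG0 z).
  have qs : bf x (A *m (A *m y)) = bf y (A *m (A *m x)).
    by apply: oppr_inj; rewrite -!skew bfC.
  have := q0 (x + y); rewrite !mulmxDr !bfDl !bfDr q0 q0 qs; lra.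
by rewrite hY mulmx_block !mul0mx !mulmx0 !addr0 AA Av block_mx0.
Qed.
End D.


Section Sub.
Variable R : realType.
Variables (n k : nat) (X : 'I_k -> 'M[R]_(n + 1)) (c : 'I_k -> R).

Lemma ul_sum : ulsubmx (\sum_i c i *: X i) = \sum_i c i *: ulsubmx (X i).
Proof. by apply/matrixP => i j; rewrite !mxE !summxE; apply: eq_bigr => l _; rewrite !mxE. Qed.
Lemma ur_sum : ursubmx (\sum_i c i *: X i) = \sum_i c i *: ursubmx (X i).
Proof. by apply/matrixP => i j; rewrite !mxE !summxE; apply: eq_bigr => l _; rewrite !mxE. Qed.
Lemma dl_sum : dlsubmx (\sum_i c i *: X i) = \sum_i c i *: dlsubmx (X i).
Proof. by apply/matrixP => i j; rewrite !mxE !summxE; apply: eq_bigr => l _; rewrite !mxE. Qed.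
Lemma dr_sum : drsubmx (\sum_i c i *: X i) = \sum_i c i *: drsubmx (X i).
Proof. by apply/matrixP => i j; rewrite !mxE !summxE; apply: eq_bigr => l _; rewrite !mxE. Qed.

Lemma bvec_sum p : bvec (\sum_i c i *: X i) p = \sum_i c i *: bvec (X i) p.
Proof.
rewrite /bvec ul_sum ur_sum mulmx_suml -big_split /=; apply: eq_bigr => i _.
by rewrite -scalemxAl scalerDr.
Qed.
End Sub.

Lemma act_aff (R : realType) n (L : 'M[R]_n) w p : act (affmx L w) p = L *m p + w.
Proof. by rewrite /act /affmx mul_block_col col_mxKu mulmx1. Qed.

Lemma act1Y (R : realType) n (Y : 'M[R]_(n + 1)) p : act (1%:M + Y) p = p + bvec Y p.
Proof.
rewrite /act mulmxDl mul1mx linearD /= col_mxKu -{1}[Y]submxK mul_block_col col_mxKu.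
by rewrite mulmx1.
Qed.

Lemma mxpow_ge2 (R : realType) m (Y : 'M[R]_m) l : Y *m Y = 0 -> (2 <= l)%N -> mxpow Y l = 0.
Proof.
move=> YY; elim: l => // -[|[|l]] IH // _.
  by rewrite mxpowS mxpowS /mxpow /= mulmx1 YY.
by rewrite mxpowS IH // mulmx0.
Qed.

Lemma mxexp_sq (R : realType) m (Y : 'M[R]_m) : Y *m Y = 0 -> mxexp Y = 1%:M + Y.
Proof.
move=> YY; apply/matrixP => i j; rewrite mxE; apply: norm_lim_near_cst.
have e : forall N, \sum_(l < N.+2) mxpow Y l i j / l`!%:R = (1%:M + Y) i j.
  elim=> [|N IH].
    by rewrite !big_ord_recl big_ord0 /= !divr1 mulmx1 addr0 [in RHS]mxE.
  by rewrite big_ord_recr IH (@mxpow_ge2 _ _ Y N.+2) // (_ : (0 : 'M[R]_m) i j = 0) ?mxE // mul0r /= addr0.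
exists 2%N => // N /= N2.
by have := e (N - 2)%N; rewrite -addn2 subnK.
Qed.

Section Main.
Variable R : realType.
Variables (n k : nat) (S : 'M[R]_n) (G : set 'M[R]_(n + 1)) (X : 'I_k -> 'M[R]_(n + 1)).
Hypothesis Ssym : S^T = S.
Hypothesis Sunit : S \in unitmx.
Hypothesis Gsub : is_subgroup G.
Hypothesis Giso : G `<=` Iso S.
Hypothesis Gtr : forall p q : 'cV[R]_n, exists c, Iso S c /\
      (forall g, G g -> c *m g = g *m c) /\ act c p = q.
Hypothesis Gm : malcev_basis G X.

Definition inW (Y : 'M[R]_(n + 1)) := exists c : 'I_k -> R, Y = \sum_i c i *: X i.
Definition Zc (c : 'M[R]_(n + 1)) := Iso S c /\ (forall g, G g -> c *m g = g *m c).

Lemma inW0 : inW 0.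
Proof. by exists (fun=> 0); rewrite big1 // => i _; rewrite scale0r. Qed.
Lemma inWD Y Z : inW Y -> inW Z -> inW (Y + Z).
Proof.
move=> [c ->] [d ->]; exists (fun i => c i + d i).
by rewrite -big_split; apply: eq_bigr => i _; rewrite scalerDl.
Qed.
Lemma inWZ a Y : inW Y -> inW (a *: Y).
Proof.
move=> [c ->]; exists (fun i => a * c i).
by rewrite scaler_sumr; apply: eq_bigr => i _; rewrite scalerA.
Qed.
Lemma inWX i : inW (X i).
Proof.
exists (fun j => (j == i)%:R); rewrite (bigD1 i) //= eqxx scale1r big1 ?addr0 //.
by move=> j /negbTE ->; rewrite scale0r.
Qed.
Lemma inW_sum (I : finType) (F : I -> 'M[R]_(n + 1)) :
  (forall i, inW (F i)) -> inW (\sum_i F i).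
Proof. by move=> h; apply: big_ind => //; [exact: inW0 | exact: inWD]. Qed.

Lemma lieX i : forall t, G (mxexp (t *: X i)).
Proof. by case: Gm => h _ _ _; apply: h. Qed.

Lemma inW_props Y : inW Y -> [/\ dlsubmx Y = 0, drsubmx Y = 0,
   (ulsubmx Y)^T *m S + S *m ulsubmx Y = 0 & forall c, Zc c -> c *m Y = Y *m c].
Proof.
move=> [c ->]; split.
- rewrite dl_sum big1 // => i _.
  by have [-> _ _] := lie_props Giso (lieX i); rewrite scaler0.
- rewrite dr_sum big1 // => i _.
  by have [_ -> _] := lie_props Giso (lieX i); rewrite scaler0.
- rewrite ul_sum linear_sum /= mulmx_suml mulmx_sumr -big_split big1 //= => i _.
  have [_ _ h] := lie_props Giso (lieX i).
  by rewrite linearZ /= -scalemxAl -scalemxAr -scalerDr h scaler0.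
- move=> d [_ hd]; rewrite mulmx_sumr mulmx_suml; apply: eq_bigr => i _.
  by rewrite -scalemxAr -scalemxAl (lie_comm (lieX i) hd).
Qed.

Lemma W_sq Y : inW Y -> Y *m Y = 0.
Proof.
move=> hY; have [h1 h2 h3 h4] := inW_props hY.
apply: (sq_zero Ssym Sunit h1 h2 h3) => w.
have [c [hIso [hcom hact]]] := Gtr 0 w.
have [L [w' [hc hL]]] := hIso.
exists L; split => //.
move: hact; rewrite hc act_aff mulmx0 add0r => <-; rewrite -hc.
by apply: h4.
Qed.

Lemma G_form g : G g -> exists Y, inW Y /\ g = 1%:M + Y.
Proof.
case: Gm => _ _ _ h /h [t [-> _]].
have hW : inW (\sum_i t i *: X i) by exists t.
by exists (\sum_i t i *: X i); split => //; rewrite mxexp_sq // W_sq.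
Qed.

Lemma GX i t : G (1%:M + t *: X i).
Proof. rewrite -mxexp_sq; first exact: lieX. by apply: W_sq; apply: inWZ; apply: inWX. Qed.

Lemma Gmul g h : G g -> G h -> G (g *m h).
Proof. by case: Gsub => _ hm _; apply: hm. Qed.
Lemma G1 : G 1%:M.
Proof. by case: Gsub. Qed.

Lemma W_mulX i j : inW (X i *m X j).
Proof.
have := Gmul (GX i 1) (GX j 1); rewrite !scale1r => /G_form [Y [hY e]].
have -> : X i *m X j = Y - X i - X j.
  move: e; rewrite mulmxDl mul1mx mulmxDr mulmx1 -!addrA => /addrI <-.
  by apply/matrixP => a b; rewrite !mxE; ring.
by apply: inWD; [apply: inWD|]; rewrite ?hY //; rewrite -scaleN1r; apply: inWZ; apply: inWX.
Qed.

Lemma W_mul Y Z : inW Y -> inW Z -> inW (Y *m Z).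
Proof.
move=> [c ->] [d ->]; rewrite mulmx_suml; apply: inW_sum => i.
rewrite mulmx_sumr; apply: inW_sum => j.
by rewrite -scalemxAl -scalemxAr; apply: inWZ; apply: inWZ; apply: W_mulX.
Qed.

Lemma W_anti Y Z : inW Y -> inW Z -> Y *m Z = - (Z *m Y).
Proof.
move=> hY hZ; have := W_sq (inWD hY hZ).
rewrite mulmxDl !mulmxDr (W_sq hY) (W_sq hZ) add0r addr0 => /eqP.
by rewrite addr_eq0 => /eqP.
Qed.

Lemma W_triple Y Z U : inW Y -> inW Z -> inW U -> Y *m Z *m U = 0.
Proof.
move=> hY hZ hU.
have h1 : Y *m Z *m U = - (Z *m U *m Y).
  by rewrite -mulmxA (W_anti hY (W_mul hZ hU)).
have h2 : Y *m Z *m U = Z *m U *m Y.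
  rewrite (W_anti hY hZ) mulNmx -(mulmxA Z Y U) (W_anti hY hU) mulmxN opprK mulmxA.
  by [].
have h3 : Z *m U *m Y = 0.
  have : (Z *m U *m Y) + (Z *m U *m Y) = 0 by rewrite -{1}h2 h1 addNr.
  rewrite -mulr2n -scaler_nat => /eqP; rewrite scaler_eq0 => /orP[|/eqP //].
  by rewrite pnatr_eq0.
by rewrite h1 h3 oppr0.
Qed.
Lemma expand2 (U V : 'M[R]_(n + 1)) : U *m U = 0 -> U *m V = 0 -> V *m U = 0 ->
  V *m V = 0 -> (1%:M + U + V) *m (1%:M + U - V) = 1%:M + (U + U).
Proof.
move=> h1 h2 h3 h4.
rewrite !mulmxDl !mulmxDr !mulmxN !mul1mx !mulmx1 h1 h2 h3 h4.
by apply/matrixP => a b; rewrite !mxE; ring.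
Qed.

Lemma W_inG_all Y : inW Y -> forall t, G (1%:M + t *: Y).
Proof.
move=> [c ->]; clear Y.
pose P M := inW M /\ (forall t, G (1%:M + t *: M)).
suff : P (\sum_i c i *: X i) by case.
apply: (big_ind P).
- by split; [exact: inW0 | move=> t; rewrite scaler0 addr0; exact: G1].
- move=> Y Z [hY gY] [hZ gZ]; split; first exact: inWD.
  move=> t; pose a := t / 2.
  pose U := a *: Y + a *: Z; pose V := (a * a) *: (Y *m Z).
  have hU : inW U by apply: inWD; apply: inWZ.
  have e1 : (1%:M + a *: Y) *m (1%:M + a *: Z) = 1%:M + U + V.
    rewrite /U /V !mulmxDl !mulmxDr !mul1mx !mulmx1 -scalemxAl -scalemxAr scalerA.
    by apply/matrixP => i j; rewrite !mxE; ring.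
  have e2 : (1%:M + a *: Z) *m (1%:M + a *: Y) = 1%:M + U - V.
    rewrite /U /V !mulmxDl !mulmxDr !mul1mx !mulmx1 -scalemxAl -scalemxAr scalerA.
    rewrite (W_anti hZ hY) scalerN.
    by apply/matrixP => i j; rewrite !mxE; ring.
  have hUU : U *m U = 0 := W_sq hU.
  have hUV : U *m V = 0.
    by rewrite /V -scalemxAr mulmxA (W_triple hU hY hZ) scaler0.
  have hVU : V *m U = 0.
    by rewrite /V -scalemxAl (W_triple hY hZ hU) scaler0.
  have hVV : V *m V = 0.
    by rewrite /V -scalemxAl -scalemxAr mulmxA (W_triple hY hZ hY) mul0mx !scaler0.
  have -> : 1%:M + t *: (Y + Z) = 1%:M + (U + U).
    congr (_ + _); rewrite /U /a; apply/matrixP => i j; rewrite !mxE; by field.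
  rewrite -(expand2 hUU hUV hVU hVV) -e1 -e2.
  by apply: Gmul; apply: Gmul.
- move=> i _; split; first by apply: inWZ; apply: inWX.
  by move=> t; rewrite scalerA; apply: GX.
Qed.

Lemma orbit_eq p q : (exists g, G g /\ q = act g p) <->
  (exists c : 'I_k -> R, q = p + \sum_(i < k) c i *: bvec (X i) p).
Proof.
split.
  move=> [g [/G_form [Y [[c ->] ->]] ->]].
  by exists c; rewrite act1Y bvec_sum.
move=> [c ->]; exists (1%:M + \sum_i c i *: X i); split.
  by rewrite -[\sum_i _]scale1r; apply: W_inG_all; exists c.
by rewrite act1Y bvec_sum.
Qed.

Lemma free_rank p : \rank (\matrix_(i < k) (bvec (X i) p)^T) = k.
Proof.
apply/eqP; apply: inj_row_free => u hu.
have hb : \sum_i u 0 i *: bvec (X i) p = 0.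
  apply: trmx_inj; rewrite trmx0 -hu mulmx_sum_row linear_sum /=.
  by apply: eq_bigr => i _; rewrite rowK linearZ.
set Y := \sum_i u 0 i *: X i.
have hW : inW Y by exists (fun i => u 0 i).
have [hdl hdr _ hcom] := inW_props hW.
set A := ulsubmx Y; set v := ursubmx Y.
have hY : Y = block_mx A v 0 0 by rewrite -hdl -hdr submxK.
have bp : bvec Y p = 0 by rewrite /Y bvec_sum.
have bq : forall q, bvec Y q = 0.
  move=> q; have [c [hIso [hc hact]]] := Gtr p q.
  have [L [w [ec _]]] := hIso.
  have := hcom c (conj hIso hc).
  rewrite ec hY /affmx !mulmx_block => /eq_block_mx[e1 e2 _ _].
  move: e1 e2; rewrite !mulmx0 !addr0 mulmx1 => e1 e2.
  move: hact; rewrite ec act_aff => <-.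
  move: bp; rewrite /bvec -/A -/v => bp.
  by rewrite block_mxKul block_mxKur mulmxDr mulmxA -e1 -addrA -e2 -mulmxA -mulmxDr bp mulmx0.
have v0 : v = 0 by have := bq 0; rewrite /bvec mulmx0 add0r.
have A0 : A = 0.
  apply/matrixP => a b; have := bq (delta_mx b 0).
  rewrite /bvec -/A -/v v0 addr0 -colE => /matrixP /(_ a 0).
  by rewrite !mxE.
have Y0 : Y = 0 by rewrite hY v0 A0 block_mx0.
case: Gm => _ _ hind _.
apply/matrixP => a b; rewrite (ord1 a) mxE.
exact: (hind (fun i => u 0 i) Y0 b).
Qed.
End Main.


Lemma form_props (R : realType) n s (S : 'M[R]_n) :
  form_of_signature s S -> S^T = S /\ S \in unitmx.
Proof.
move=> [_ [hs [P [hP eS]]]]; split => //.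
rewrite eS.
rewrite !unitmx_mul unitmx_tr hP andbT /= unitmxE unitfE det_diag.
apply/prodf_neq0 => i _; rewrite mxE; case: ifP => _.
  exact: oner_neq0.
by rewrite oppr_eq0 oner_neq0.
Qed.

Unset Implicit Arguments.

Theorem proposition4p1 (R : realType) (n s k : nat) (S : 'M[R]_n)
  (G : set 'M[R]_(n + 1)) (X : 'I_k -> 'M[R]_(n + 1)) :
  form_of_signature s S ->
  is_subgroup G ->
  G `<=` Iso S ->
  zariski_closed G ->
  unipotent_group G ->
  (forall p q : 'cV[R]_n, exists c, Iso S c /\
      (forall g, G g -> c *m g = g *m c) /\ act c p = q) ->
  malcev_basis G X ->
  forall p : 'cV[R]_n,
    (forall q : 'cV[R]_n,
       (exists g, G g /\ q = act g p) <->
       (exists c : 'I_k -> R, q = p + \sum_(i < k) c i *: bvec (X i) p)) /\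
    \rank (\matrix_(i < k) (bvec (X i) p)^T) = k.
Proof.
move=> hS hsub hiso _ _ htr hm p.
have [Ssym Sunit] := @form_props _ _ _ _ hS.
split.
  by move=> q; apply: (orbit_eq Ssym Sunit hsub hiso htr hm).
exact: (free_rank hiso htr hm p).
Qed.
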